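(* Consider the distributed detection model described in the context, with fixed $N\ge 1$, priors $P_0,P_1\in(0,1)$, and local operating point $0<P_f<P_d<1$. Say that the fusion center is blind for a triple $(\alpha,P_{1,0},P_{0,1})\in[0,1]^3$ if $P(H_i\mid \mathbf u)=P(H_i)$ for $i=0,1$ and every $\mathbf u\in\{0,1\}^N$ (equivalently $P(\mathbf u\mid H_0)=P(\mathbf u\mid H_1)$ for all $\mathbf u$). Then the smallest fraction $\alpha\in[0,1]$ for which there exist Byzantine flipping probabilities $(P_{1,0},P_{0,1})\in[0,1]^2$ making the fusion center blind is $\alpha_{blind}=1/2$.
   Context: Binary hypothesis test between $H_0$ (signal absent) and $H_1$ (signal present) with prior probabilities $P_0=P(H_0)$, $P_1=P(H_1)$, $P_0+P_1=1$. There are $N$ sensors; each sensor $i$ makes a local binary decision $v_i\in\{0,1\}$, and, conditionally on the hypothesis, the $v_i$ are i.i.d. with $P(v_i=1\mid H_1)=P_d$, $P(v_i=1\mid H_0)=P_f$. Each sensor, independently, is a Byzantine with probability $\alpha\in[0,1]$ (and honest otherwise). An honest node sends $u_i=v_i$ to the fusion center. A Byzantine node sends $u_i=1$ with probability $P_{1,0}$ when $v_i=0$ and sends $u_i=0$ with probability $P_{0,1}$ when $v_i=1$ (so it sends $u_i=1$ with probability $1-P_{0,1}$ when $v_i=1$). Consequently, conditionally on $H_j$, the $u_i$ are i.i.d. Bernoulli with $P(u_i=1\mid H_0)=\pi_{1,0}=\alpha(P_{1,0}(1-P_f)+(1-P_{0,1})P_f)+(1-\alpha)P_f$ and $P(u_i=1\mid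 H_1)=\pi_{1,1}=\alpha(P_{1,0}(1-P_d)+(1-P_{0,1})P_d)+(1-\alpha)P_d$. The fusion center observes $\mathbf u=(u_1,\dots,u_N)$. *)

(* Defs.v *)
From mathcomp Require Import all_boot all_order all_algebra.
Set Implicit Arguments. Unset Strict Implicit. Unset Printing Implicit Defensive.
Import Order.TTheory GRing.Theory Num.Theory.
Local Open Scope ring_scope.

Section Model.
Variable R : realFieldType.

(* P(u_i = 1 | H_0) *)
Definition pi10 (Pf alpha P10 P01 : R) : R :=
  alpha * (P10 * (1 - Pf) + (1 - P01) * Pf) + (1 - alpha) * Pf.

(* P(u_i = 1 | H_1) *)
Definition pi11 (Pd alpha P10 P01 : R) : R :=
  alpha * (P10 * (1 - Pd) + (1 - P01) * Pd) + (1 - alpha) * Pd.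

Definition lik (N : nat) (p : R) (u : 'I_N -> bool) : R :=
  \prod_(i < N) (if u i then p else 1 - p).

Definition likH0 (N : nat) (Pf alpha P10 P01 : R) (u : 'I_N -> bool) : R :=
  lik (pi10 Pf alpha P10 P01) u.
Definition likH1 (N : nat) (Pd alpha P10 P01 : R) (u : 'I_N -> bool) : R :=
  lik (pi11 Pd alpha P10 P01) u.

Definition post0 (N : nat) (P0 P1 Pf Pd alpha P10 P01 : R) (u : 'I_N -> bool) : R :=
  P0 * likH0 Pf alpha P10 P01 u /
  (P0 * likH0 Pf alpha P10 P01 u + P1 * likH1 Pd alpha P10 P01 u).
Definition post1 (N : nat) (P0 P1 Pf Pd alpha P10 P01 : R) (u : 'I_N -> bool) : R :=
  P1 * likH1 Pd alpha P10 P01 u /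
  (P0 * likH0 Pf alpha P10 P01 u + P1 * likH1 Pd alpha P10 P01 u).

Definition blind (N : nat) (P0 P1 Pf Pd alpha P10 P01 : R) : Prop :=
  forall u : 'I_N -> bool,
    post0 P0 P1 Pf Pd alpha P10 P01 u = P0 /\
    post1 P0 P1 Pf Pd alpha P10 P01 u = P1.

Definition blinding_alpha (N : nat) (P0 P1 Pf Pd alpha : R) : Prop :=
  0 <= alpha <= 1 /\
  exists P10 P01 : R, 0 <= P10 <= 1 /\ 0 <= P01 <= 1 /\
    blind N P0 P1 Pf Pd alpha P10 P01.

End Model.

(* Main.v *)
Require Import Defs.
From mathcomp Require Import all_boot all_order all_algebra.
From mathcomp Require Import ring lra.
Import Order.TTheory GRing.Theory Num.Theory.
Local Open Scope ring_scope.

Lemma lik_true (R : realFieldType) (N : nat) (p : R) :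
  lik p (fun _ : 'I_N => true) = p ^+ N.
Proof. by rewrite /lik prodr_const card_ord. Qed.

Lemma lik_const (R : realFieldType) (N : nat) (p : R) (u : 'I_N -> bool) :
  lik p u = \prod_(i < N) (if u i then p else 1 - p).
Proof. by []. Qed.

Theorem lemma1 (R : realFieldType) (N : nat) (P0 P1 Pf Pd : R) :
  (1 <= N)%N -> 0 < P0 < 1 -> 0 < P1 < 1 -> P0 + P1 = 1 ->
  0 < Pf -> Pf < Pd -> Pd < 1 ->
  blinding_alpha N P0 P1 Pf Pd (1 / 2) /\
  (forall alpha : R, blinding_alpha N P0 P1 Pf Pd alpha -> 1 / 2 <= alpha).
Proof.
move=> HN /andP[P0p P0l] /andP[P1p P1l] HP Pfp Pfd Pdl.
split.
  split; first by apply/andP; split; lra.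
  exists 1, 1; split; first by apply/andP; split; lra.
  split; first by apply/andP; split; lra.
  move=> u.
  have e0 : pi10 Pf (1/2) 1 1 = 1/2 by rewrite /pi10; field.
  have e1 : pi11 Pd (1/2) 1 1 = 1/2 by rewrite /pi11; field.
  rewrite /post0 /post1 /likH0 /likH1 e0 e1.
  set L := lik _ u.
  have L0 : L != 0.
    rewrite /L /lik; apply/prodf_neq0 => i _; case: (u i) => /=;
      apply/eqP; lra.
  rewrite -mulrDl HP mul1r; split; rewrite mulfK //.
move=> alpha [/andP[a0 a1] [P10 [P01 [/andP[q0 q1] [/andP[r0 r1] Hb]]]]].
have [Hp0 _] := Hb (fun _ => true).
move: Hp0; rewrite /post0 /likH0 /likH1 !lik_true.
set p0 := pi10 Pf alpha P10 P01.
set p1 := pi11 Pd alpha P10 P01.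
set A := p0 ^+ N; set B := p1 ^+ N.
move=> H.
have D : P0 * A + P1 * B != 0.
  apply/eqP => D; move: H; rewrite D invr0 mulr0 => H; lra.
have E : P0 * A = P0 * (P0 * A + P1 * B).
  by have := congr1 (fun x => x * (P0 * A + P1 * B)) H; rewrite /= mulfVK.
have AB : A = B.
  have : P0 * P1 * (A - B) = 0.
    have -> : P0 * P1 * (A - B) = P0 * A - P0 * (P0 * A + P1 * B).
      have -> : P1 = 1 - P0 by lra.
      ring.
    by rewrite -E subrr.
  move/eqP; rewrite mulf_eq0 mulf_eq0 subr_eq0 => /orP[/orP[]|] /eqP; try lra.
have p0n : 0 <= p0.
  rewrite /p0 /pi10; apply: addr_ge0; apply: mulr_ge0; try lra.
  apply: addr_ge0; apply: mulr_ge0; lra.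
have p1n : 0 <= p1.
  rewrite /p1 /pi11; apply: addr_ge0; apply: mulr_ge0; try lra.
  apply: addr_ge0; apply: mulr_ge0; lra.
have pe : p0 = p1.
  by apply/eqP; rewrite -(eqrXn2 HN p0n p1n) -/A -/B AB.
have : (Pd - Pf) * (1 - alpha * (P01 + P10)) = 0.
  have -> : (Pd - Pf) * (1 - alpha * (P01 + P10)) = p1 - p0.
    by rewrite /p0 /p1 /pi10 /pi11; ring.
  by rewrite pe subrr.
move/eqP; rewrite mulf_eq0 => /orP[/eqP|/eqP] h; first lra.
have : alpha * (P01 + P10) <= alpha * 2 by apply: ler_wpM2l => //; lra.
lra.
Qed.
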